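(* Let $p$ be a prime, let $n\geq 3$, and let $L$ be a nilpotent Lie ring of order $p^{n}$ and nilpotency class $n-1$. Then $pL\leq L^{n-1}$, where $pL=\{pa\mid a\in L\}$.
   Context: A Lie ring is an abelian group with a bilinear, alternating product (written $ab$) satisfying the Jacobi identity; its order is the order of the underlying additive group. The lower central series is $L^{1}=L$, $L^{2}=\langle ab\mid a,b\in L\rangle$ and for $i>2$, $L^{i}=\langle ab\mid a\in L^{i-1},\,b\in L\rangle$ (additive subgroups generated by these products). $L$ has nilpotency class $c$ if $L^{c+1}=\{0\}$ and $L^{c}\neq\{0\}$. *)

(* Defs.v *)
From HB Require Import structures.
From mathcomp Require Import all_boot all_order all_algebra.
Set Implicit Arguments. Unset Strict Implicit. Unset Printing Implicit Defensive.
Import GRing.Theory.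
Local Open Scope ring_scope.

Definition is_lie_bracket (V : zmodType) (br : V -> V -> V) : Prop :=
  [/\ (forall a b c, br (a + b) c = br a c + br b c),
      (forall a b c, br a (b + c) = br a b + br a c),
      (forall a, br a a = 0) &
      (forall a b c, br (br a b) c + br (br b c) a + br (br c a) b = 0)].

Inductive add_span (V : zmodType) (S : V -> Prop) : V -> Prop :=
  | add_span_gen x : S x -> add_span S x
  | add_span0 : add_span S 0
  | add_span_sub x y : add_span S x -> add_span S y -> add_span S (x - y).

(* lcs_aux br k = L^(k+1) *)
Fixpoint lcs_aux (V : zmodType) (br : V -> V -> V) (k : nat) : V -> Prop :=
  match k with
  | O => fun _ => True
  | S k' => add_span (fun x => exists a b, lcs_aux br k' a /\ x = br a b)
  end.

(* Lower central series, 1-indexed: L^1 = L, L^i = <ab | a in L^(i-1), b in L>. *)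
Definition lcs (V : zmodType) (br : V -> V -> V) (i : nat) : V -> Prop :=
  lcs_aux br i.-1.

Definition nil_class (V : zmodType) (br : V -> V -> V) (c : nat) : Prop :=
  (forall x, lcs br c.+1 x -> x = 0) /\ (exists x, lcs br c x /\ x <> 0).

(* Main.v *)
Require Import Defs.
From mathcomp Require Import all_boot all_order all_algebra all_fingroup cyclic.
From Stdlib Require Import ClassicalDescription Classical.
From mathcomp Require Import zify.
Set Implicit Arguments. Unset Strict Implicit. Unset Printing Implicit Defensive.
Import GRing.Theory FinRing.Theory.
Local Open Scope ring_scope.

Definition asb (A : Prop) : bool :=
  if excluded_middle_informative A then true else false.
Lemma asbP A : reflect A (asb A).
Proof. rewrite /asb; case: excluded_middle_informative => h; constructor => //. Qed.

Section Card.
Variable V : finZmodType.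
Implicit Types P Q : V -> Prop.

Definition sP P : {set V} := [set x | asb (P x)].
Lemma in_sP P x : (x \in sP P) = asb (P x).
Proof. by rewrite inE. Qed.
Lemma in_sPP P x : x \in sP P <-> P x.
Proof. by rewrite in_sP; split => /asbP. Qed.

Definition subg P := P 0 /\ forall x y, P x -> P y -> P (x - y).
Definition incl P Q := forall x, P x -> Q x.

Lemma subgN P x : subg P -> P x -> P (- x).
Proof. by case=> h0 hB hx; rewrite -sub0r; apply: hB. Qed.
Lemma subgD P x y : subg P -> P x -> P y -> P (x + y).
Proof. move=> h hx hy; rewrite -(opprK y); apply: h.2 => //; exact: subgN. Qed.

Lemma group_sP P : subg P -> group_set (sP P).
Proof.
move=> h; apply/group_setP; split; first by apply/in_sPP; exact: h.1.
move=> x y /in_sPP hx /in_sPP hy; apply/in_sPP; exact: subgD.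
Qed.

Definition gP P (h : subg P) : {group V} := Group (group_sP h).

Lemma sP_sub P Q : incl P Q -> sP P \subset sP Q.
Proof. by move=> h; apply/subsetP => x /in_sPP /h /in_sPP. Qed.

Lemma card_dvd P Q : subg P -> subg Q -> incl P Q -> (#|sP P| %| #|sP Q|)%N.
Proof.
move=> hP hQ hPQ.
have := cardSg (sP_sub hPQ : gP hP \subset gP hQ); done.
Qed.

Variable p n : nat.
Hypothesis pr : prime p.
Hypothesis cardV : #|V| = (p ^ n)%N.

Lemma card_pow P : subg P -> exists k, #|sP P| = (p ^ k)%N.
Proof.
move=> hP.
have hT : subg (fun _ : V => True) by split.
have := card_dvd hP hT (fun _ _ => I).
have -> : sP (fun _ : V => True) = [set: V].
  by apply/setP => x; rewrite !inE; apply/asbP.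
rewrite cardsT cardV => /(dvdn_pfactor _ _ pr) [k _ ->]; by exists k.
Qed.

Lemma card_grow P Q x : subg P -> subg Q -> incl P Q -> Q x -> ~ P x ->
  (p * #|sP P| <= #|sP Q|)%N.
Proof.
move=> hP hQ hPQ hx hnx.
have [a ea] := card_pow hP; have [b eb] := card_pow hQ.
have hlt : (#|sP P| < #|sP Q|)%N.
  apply: proper_card; rewrite properE sP_sub //=.
  apply/subsetPn; exists x; first exact/in_sPP.
  by apply/negP => /in_sPP.
rewrite ea eb -expnS leq_exp2l ?prime_gt1 //.
by rewrite ea eb ltn_exp2l ?prime_gt1 in hlt.
Qed.

Lemma card_eq P Q : incl P Q -> (#|sP Q| <= #|sP P|)%N -> incl Q P.
Proof.
move=> hPQ hc.
have /eqP e : sP P == sP Q by rewrite eqEcard sP_sub.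
by move=> x /in_sPP; rewrite -e => /in_sPP.
Qed.

Lemma card_pos P : subg P -> (0 < #|sP P|)%N.
Proof. by move=> h; apply/card_gt0P; exists 0; apply/in_sPP; exact: h.1. Qed.

Lemma cardT : #|sP (fun _ : V => True)| = (p ^ n)%N.
Proof.
have -> : sP (fun _ : V => True) = [set: V].
  by apply/setP => x; rewrite !inE; apply/asbP.
by rewrite cardsT.
Qed.

Lemma mul_card_zero (x : V) : x *+ (p ^ n) = 0.
Proof.
rewrite -cardV -zmodXgE; apply/eqP; rewrite -order_dvdn.
by rewrite -cardsT order_dvdG ?inE.
Qed.

Definition pim P y := exists x, P x /\ y = x *+ p.
Definition pker P x := P x /\ x *+ p = 0.

Lemma mulp_morph : {in [set: V] &, {morph (fun x : V => x *+ p) : x y / (x * y)%g}}.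
Proof. by move=> x y _ _ /=; rewrite !zmodMgE mulrnDl. Qed.
Definition mm := Morphism mulp_morph.

Lemma card_pimker P : subg P -> #|sP P| = (#|sP (pim P)| * #|sP (pker P)|)%N.
Proof.
move=> hP.
have e1 : (mm @* gP hP)%g = sP (pim P).
  rewrite morphimEsub ?subsetT //; apply/setP => y; rewrite in_sP; apply/imsetP/asbP.
    by case=> x /in_sPP hx ->; exists x.
  by case=> x [hx ->]; exists x => //; apply/in_sPP.
have e2 : ([set: V] :&: gP hP :&: 'ker mm)%g = sP (pker P).
  apply/setP => x; rewrite !inE /=; apply/andP/asbP.
    by case=> /asbP hx /eqP h; split.
  by case=> hx h; split; [apply/asbP | apply/eqP].
have := card_morphim mm (gP hP); rewrite e1 => ->.
rewrite -e2 !setTI -indexgI mulnC (Lagrange (subsetIl _ _)).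
by [].
Qed.

End Card.

Lemma sub4 (W : zmodType) (a b c d : W) : a - b - (c - d) = (a - c) - (b - d).
Proof. by rewrite !opprB addrACA [RHS]addrACA (addrC (- c)). Qed.

Section Lie.
Variable V : finZmodType.
Variable br : V -> V -> V.
Hypothesis hL : is_lie_bracket br.
Implicit Types P Q : V -> Prop.

Lemma brDl a b c : br (a + b) c = br a c + br b c. Proof. by case: hL. Qed.
Lemma brDr a b c : br a (b + c) = br a b + br a c. Proof. by case: hL. Qed.
Lemma braa a : br a a = 0. Proof. by case: hL. Qed.
Lemma br0l c : br 0 c = 0.
Proof. by apply: (addrI (br 0 c)); rewrite -brDl !addr0. Qed.
Lemma br0r c : br c 0 = 0.
Proof. by apply: (addrI (br c 0)); rewrite -brDr !addr0. Qed.
Lemma brNl a c : br (- a) c = - br a c.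
Proof. by apply: (addrI (br a c)); rewrite -brDl !subrr br0l. Qed.
Lemma brNr a c : br c (- a) = - br c a.
Proof. by apply: (addrI (br c a)); rewrite -brDr !subrr br0r. Qed.
Lemma brC a b : br a b = - br b a.
Proof.
have := braa (a + b); rewrite brDl !brDr !braa add0r addr0 => /eqP.
by rewrite addr_eq0 => /eqP.
Qed.
Lemma brMnl a c m : br (a *+ m) c = br a c *+ m.
Proof. by elim: m => [|m ih]; rewrite ?br0l // !mulrS brDl ih. Qed.
Lemma brMzl a c z : br (a *~ z) c = br a c *~ z.
Proof.
case: z => m; first exact: brMnl.
by rewrite !NegzE !mulrNz -!pmulrn brNl brMnl.
Qed.
Lemma brMzr a c z : br c (a *~ z) = br c a *~ z.
Proof. by rewrite brC brMzl -mulNrz -brC. Qed.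

Lemma subgMn P x m : subg P -> P x -> P (x *+ m).
Proof. by move=> h hx; elim: m => [|m ih]; [exact: h.1 | rewrite mulrS; exact: subgD]. Qed.
Lemma subgMz P x z : subg P -> P x -> P (x *~ z).
Proof.
move=> h hx; case: z => m; first exact: subgMn.
rewrite NegzE mulrNz; apply: subgN => //; rewrite -pmulrn; exact: subgMn.
Qed.

Lemma span_subg (S : V -> Prop) : subg (add_span S).
Proof. split; [exact: add_span0 | move=> x y; exact: add_span_sub]. Qed.
Lemma span_min (S Q : V -> Prop) : subg Q -> incl S Q -> incl (add_span S) Q.
Proof.
move=> hQ hS x; elim=> [y /hS //| | y z _ hy _ hz]; first exact: hQ.1.
exact: hQ.2.
Qed.

Definition sumP (P Q : V -> Prop) y := exists u w, P u /\ Q w /\ y = u + w.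
Definition cycP x (P : V -> Prop) y := exists z : int, P (y - x *~ z).
Definition ideal (I : V -> Prop) := subg I /\ forall a b, I a -> I (br a b).

Lemma sum_subg P Q : subg P -> subg Q -> subg (sumP P Q).
Proof.
move=> hP hQ; split; first by exists 0, 0; rewrite addr0; split; [exact: hP.1|split; [exact: hQ.1|]].
move=> x y [u [w [hu [hw ->]]]] [u' [w' [hu' [hw' ->]]]].
exists (u - u'), (w - w'); split; first exact: hP.2.
split; first exact: hQ.2.
by rewrite opprD addrACA.
Qed.
Lemma sumP_l P Q x : subg Q -> P x -> sumP P Q x.
Proof. by move=> hQ hx; exists x, 0; rewrite addr0; split=> //; split=> //; exact: hQ.1. Qed.
Lemma sumP_r P Q x : subg P -> Q x -> sumP P Q x.
Proof. by move=> hP hx; exists 0, x; rewrite add0r; split=> //; exact: hP.1. Qed.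

Lemma cyc_subg x P : subg P -> subg (cycP x P).
Proof.
move=> hP; split; first by exists 0; rewrite mulr0z subr0; exact: hP.1.
move=> a b [z hz] [z' hz']; exists (z - z').
by rewrite mulrzBr sub4; apply: hP.2.
Qed.
Lemma cycP_in x P y : subg P -> P y -> cycP x P y.
Proof. by move=> hP hy; exists 0; rewrite mulr0z subr0. Qed.
Lemma cycP_x x P : subg P -> cycP x P x.
Proof. by move=> hP; exists 1; rewrite mulr1z subrr; exact: hP.1. Qed.

Definition Gm k := lcs_aux br k.

Lemma Gm_subg k : subg (Gm k).
Proof. by case: k => [|k] /=; [split | exact: span_subg]. Qed.
Lemma Gm_brl k a b : Gm k a -> Gm k.+1 (br a b).
Proof. by move=> h; apply: add_span_gen; exists a, b. Qed.
Lemma Gm_brr k a b : Gm k b -> Gm k.+1 (br a b).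
Proof. by move=> h; rewrite brC; apply: subgN; [exact: Gm_subg | exact: Gm_brl]. Qed.
Lemma Gm_anti k : incl (Gm k.+1) (Gm k).
Proof.
elim: k => [//|k ih].
apply: span_min; first exact: Gm_subg.
by move=> x [a [b [ha ->]]]; apply: Gm_brl; apply: ih.
Qed.
Lemma Gm_antiN i j : (i <= j)%N -> incl (Gm j) (Gm i).
Proof.
move=> /subnK <-; elim: (j - i)%N => [//|t ih] x hx.
by apply: ih; rewrite addSn in hx; apply: Gm_anti.
Qed.
Lemma Gm_ideal k : ideal (Gm k).
Proof. split; first exact: Gm_subg. by move=> a b h; apply: Gm_anti; apply: Gm_brl. Qed.

Lemma shift I k j : ideal I -> incl (Gm k) (sumP I (Gm j)) ->
  incl (Gm k.+1) (sumP I (Gm j.+1)).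
Proof.
move=> [hI hIb] h; apply: span_min; first by apply: sum_subg => //; exact: Gm_subg.
move=> x [a [b [ha ->]]].
have [u [w [hu [hw ->]]]] := h a ha.
exists (br u b), (br w b); split; first exact: hIb.
by split; [exact: Gm_brl | rewrite brDl].
Qed.

Variable D : nat.
Hypothesis zeroD : forall x, Gm D x -> x = 0.

Lemma Aprime I k : ideal I -> incl (Gm k) (sumP I (Gm k.+1)) -> incl (Gm k) I.
Proof.
move=> hI h.
have ht : forall t, incl (Gm k) (sumP I (Gm (k.+1 + t))).
  elim=> [|t ih]; first by rewrite addn0.
  move=> y hy.
  have [u [w [hu [hw ->]]]] := h y hy.
  have [u' [w' [hu' [hw' ->]]]] := shift hI ih hw.
  exists (u + u'), w'; split; first exact: subgD hI.1 hu hu'.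
  by split; [rewrite addnS -addSn | rewrite addrA].
move=> y /(ht D) [u [w [hu [hw ->]]]].
have -> : w = 0 by apply: zeroD; apply: Gm_antiN hw; rewrite leq_addl.
by rewrite addr0.
Qed.

Lemma L3 I x : ideal I -> (forall v, cycP x (sumP I (Gm 1)) v) -> incl (Gm 1) I.
Proof.
move=> hI hv; apply: (Aprime hI).
have hT : subg (sumP I (Gm 2)) by apply: sum_subg; [exact: hI.1 | exact: Gm_subg].
have hs : forall s c, sumP I (Gm 1) s -> sumP I (Gm 2) (br s c).
  move=> s c [u [w [hu [hw ->]]]]; rewrite brDl.
  exists (br u c), (br w c); split; first exact: hI.2.
  by split=> //; exact: Gm_brl.
have hs' : forall s c, sumP I (Gm 1) s -> sumP I (Gm 2) (br c s).
  by move=> s c h; rewrite brC; apply: subgN => //; exact: hs.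
apply: span_min => // y [a [b [_ ->]]].
have [z hz] := hv a; have [z' hz'] := hv b.
have -> : br a b = br x b *~ z + br (a - x *~ z) b.
  by rewrite -brMzl -brDl addrC subrK.
apply: subgD => //; last exact: hs.
apply: subgMz => //.
have -> : br x b = br x (x *~ z') + br x (b - x *~ z').
  by rewrite -brDr addrC subrK.
by rewrite brMzr braa mul0rz add0r; exact: hs'.
Qed.

End Lie.

Section Main.
Variable V : finZmodType.
Variable br : V -> V -> V.
Hypothesis hL : is_lie_bracket br.
Variables p d : nat.
Hypothesis pr : prime p.
Hypothesis hd : (1 <= d)%N.
Hypothesis cardV : #|V| = (p ^ d.+2)%N.
Hypothesis zero : forall x, Gm br d.+1 x -> x = 0.
Variable x0 : V.
Hypothesis hx0 : Gm br d x0.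
Hypothesis nz : x0 <> 0.

Local Notation e k := #|sP (Gm br k)|.
Local Notation G := (Gm br).

Lemma zero_ideal : ideal br (fun y : V => y = 0).
Proof.
split; first by split=> // x y -> ->; rewrite subrr.
by move=> a b ->; rewrite br0l.
Qed.

Lemma G1_nz : ~ incl (G 1) (fun y => y = 0).
Proof. by move=> h; apply: nz; apply: h; apply: (Gm_antiN (i:=1) hd). Qed.

Lemma strict k : (k <= d)%N -> exists x, G k x /\ ~ G k.+1 x.
Proof.
move=> hk; apply: NNPP => hn.
have h0 : incl (G k) (G k.+1).
  move=> x hx; apply: NNPP => hx'; apply: hn; by exists x.
have ht : forall t, incl (G (k + t)) (G (k + t).+1).
  elim=> [|t ih]; first by rewrite addn0.
  rewrite addnS; apply: span_min; first exact: Gm_subg.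
  by move=> y [a [b [ha ->]]]; apply: Gm_brl; apply: ih.
have hc : forall t, incl (G k) (G (k + t)).
  elim=> [|t ih]; first by rewrite addn0.
  by move=> y /ih /ht; rewrite addnS.
apply: nz; apply: zero.
have := hc (d.+1 - k)%N; rewrite subnKC; last by apply: leqW.
by move=> h; apply: h; apply: Gm_antiN hx0.
Qed.

Lemma e_grow k : (k <= d)%N -> (p * e k.+1 <= e k)%N.
Proof.
move=> hk; have [x [hx hnx]] := strict hk.
apply: (card_grow pr cardV (x := x)) => //; try exact: Gm_subg.
exact: Gm_anti.
Qed.

Lemma e_last : e d.+1 = 1%N.
Proof.
have -> : sP (G d.+1) = [set 0].
  apply/setP => y; rewrite in_sP inE; apply/asbP/eqP; first exact: zero.
  by move=> ->; exact: (Gm_subg br _).1.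
by rewrite cards1.
Qed.

Lemma e_0 : e 0 = (p ^ d.+2)%N.
Proof. exact: cardT cardV. Qed.

Lemma e_top : (p ^ 2 * e 1 <= e 0)%N.
Proof.
rewrite leqNgt; apply/negP => hlt.
have [a ea] := card_pow pr cardV (Gm_subg br 0).
have [b eb] := card_pow pr cardV (Gm_subg br 1).
have hg := e_grow (leq0n d).
have e01 : e 0 = (p * e 1)%N.
  rewrite ea eb in hlt hg *; rewrite -expnD in hlt; rewrite -expnS in hg *.
  rewrite ltn_exp2l ?prime_gt1 // in hlt; rewrite leq_exp2l ?prime_gt1 // in hg.
  by congr (_ ^ _)%N; lia.
have [x [_ hnx]] := strict (leq0n d).
have hJ : subg (cycP x (G 1)) by apply: cyc_subg; exact: Gm_subg.
have hg2 := card_grow pr cardV (Gm_subg br 1) hJ (fun y hy => cycP_in x (Gm_subg br 1) hy) (cycP_x x (Gm_subg br 1)) hnx.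
have hall : incl (G 0) (cycP x (G 1)).
  by apply: (card_eq (P := cycP x (G 1))) => //; rewrite e01.
apply: G1_nz; apply: (L3 hL zero zero_ideal (x := x)) => v.
have [z hz] := hall v I; exists z; apply: sumP_r => //; exact: zero_ideal.1.
Qed.

Lemma e_lower t : (t <= d.+1)%N -> (p ^ t <= e (d.+1 - t))%N.
Proof.
elim: t => [|t ih] ht; first by rewrite subn0 e_last.
have hk : (d - t <= d)%N by apply: leq_subr.
have := e_grow hk; have e1 : (d - t).+1 = (d.+1 - t)%N by lia.
rewrite e1 => hg; rewrite subSS expnS.
apply: leq_trans hg; rewrite leq_pmul2l ?prime_gt0 //; apply: ih; lia.
Qed.

Lemma e_upper t : (t <= d)%N -> (e t.+1 * p ^ t <= e 1)%N.
Proof.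
elim: t => [|t ih] ht; first by rewrite muln1.
have := e_grow ht => hg.
apply: leq_trans (ih (ltnW ht)).
by rewrite expnS mulnA (mulnC _ p) leq_pmul2r ?expn_gt0 ?prime_gt0.
Qed.

Lemma e_val t : (t <= d)%N -> e t.+1 = (p ^ (d - t))%N.
Proof.
move=> ht; apply/eqP; rewrite eqn_leq; apply/andP; split; last first.
  have := e_lower (t := (d - t)%N) ltac:(lia).
  by have -> : (d.+1 - (d - t))%N = t.+1 by lia.
have h1 : (e 1 <= p ^ d)%N.
  have := e_top; rewrite e_0 -(addn2 d) expnD mulnC leq_pmul2r //.
  by rewrite expn_gt0 prime_gt0.
have := leq_trans (e_upper ht) h1.
have -> : (p ^ d = p ^ (d - t) * p ^ t)%N by rewrite -expnD subnK.
rewrite leq_pmul2r //.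
by rewrite expn_gt0 prime_gt0.
Qed.

Lemma e01 : e 0 = (p ^ 2 * e 1)%N.
Proof. by rewrite e_0 (e_val (leq0n d)) subn0 -expnD add2n. Qed.

Lemma e_step k : (1 <= k)%N -> (k <= d)%N -> e k = (p * e k.+1)%N.
Proof.
case: k => [//|k] _ hk.
rewrite (e_val (ltnW hk)) (e_val hk) -expnS; congr (_ ^ _)%N; lia.
Qed.

Lemma arith_contra (q A B K : nat) : (2 <= q)%N -> (1 <= A)%N -> (1 <= K)%N ->
  (q * q * (A * K) = q * B * K)%N -> (B <= A)%N -> False.
Proof. move=> h1 h2 h3 h4 h5. have : (q * A * K = B * K)%N by nia. have : (B * K <= A * K)%N by nia. nia. Qed.

Lemma mulz_pow (a : V) k : a *~ ((p%:Z) ^+ k) = a *+ (p ^ k).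
Proof.
elim: k => [|k ih]; first by rewrite expr0 mulr1z expn0 mulr1n.
by rewrite exprSr mulrzA ih -pmulrn expnSr mulrnA.
Qed.

Lemma pV_G1 a : G 1 (a *+ p).
Proof.
apply: NNPP => hn.
have hG1 := Gm_subg br 1.
have hJ : subg (cycP (a *+ p) (G 1)) by apply: cyc_subg.
have hJ' : subg (cycP a (G 1)) by apply: cyc_subg.
have g1 := card_grow pr cardV hG1 hJ (fun y hy => cycP_in _ hG1 hy) (cycP_x _ hG1) hn.
have hna : ~ cycP (a *+ p) (G 1) a.
  case=> z hz; apply: hn; apply: subgMn => //.
  set u : int := (p%:Z * z).
  have hu : G 1 (a - a *~ u) by rewrite /u mulrzA -pmulrn.
  have hm : forall m, G 1 (a - a *~ (u ^+ m)).
    elim=> [|m ih]; first by rewrite expr0 mulr1z subrr; exact: hG1.1.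
    have -> : a - a *~ (u ^+ m.+1) = (a - a *~ u) + (a - a *~ (u ^+ m)) *~ u.
      by rewrite exprSr mulrzA mulrzBl addrA subrK.
    by apply: subgD => //; apply: subgMz.
  have := hm d.+2; rewrite /u exprMn mulrzA mulz_pow mul_card_zero // mul0rz subr0.
  done.
have hsub : incl (cycP (a *+ p) (G 1)) (cycP a (G 1)).
  by move=> y [z hz]; exists (z * p%:Z); rewrite -mulrzA_C -pmulrn.
have g2 := card_grow pr cardV hJ hJ' hsub (cycP_x _ hG1) hna.
have hall : incl (G 0) (cycP a (G 1)).
  apply: (card_eq (P := cycP a (G 1))) => //.
  rewrite e01; apply: leq_trans g2; rewrite expnS expn1 -mulnA leq_pmul2l ?prime_gt0 //.
apply: G1_nz; apply: (L3 hL zero zero_ideal (x := a)) => v.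
have [z hz] := hall v I; exists z; apply: sumP_r => //; exact: zero_ideal.1.
Qed.

Local Notation PI := (pim p (G 0)).
Local Notation PK := (pker p (G 0)).

Lemma pim_subg (P : V -> Prop) : subg P -> subg (pim p P).
Proof.
move=> hP; split; first by exists 0; rewrite mul0rn; split=> //; exact: hP.1.
by move=> x y [u [hu ->]] [w [hw ->]]; exists (u - w); rewrite mulrnBl; split=> //; exact: hP.2.
Qed.

Lemma PI_ideal : ideal br PI.
Proof.
split; first exact: pim_subg (Gm_subg br 0).
by move=> a b [c [_ ->]]; exists (br c b); rewrite brMnl.
Qed.

Lemma PK_ideal : ideal br PK.
Proof.
split; first split.
- by split=> //; rewrite mul0rn.
- by move=> x y [_ hx] [_ hy]; split=> //; rewrite mulrnBl hx hy subrr.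
by move=> a b [_ ha]; split=> //; rewrite -(brMnl hL a b p) ha br0l.
Qed.

Lemma descent t : forall k, (k + t = d)%N -> (1 <= k)%N -> incl PI (G k) ->
  incl PI (G d) \/ exists j, [/\ (1 <= j)%N, (j < d)%N, incl (G j) PI & incl PI (G j)].
Proof.
elim: t => [|t ih] k hkt hk hPI.
  by left; rewrite -hkt addn0.
case: (classic (incl PI (G k.+1))) => hk1.
  by apply: (ih k.+1) => //; rewrite addSnnS.
right; exists k; split => //; first by lia.
have [y hy] : exists y, ~ (PI y -> G k.+1 y).
  by apply: NNPP => hn; apply: hk1 => y; apply: NNPP => h; apply: hn; exists y.
have [hy1 hy2] : PI y /\ ~ G k.+1 y.
  split; [apply: NNPP => h; apply: hy => // | move=> h; apply: hy => //].
have hM : subg (sumP PI (G k.+1)) by apply: sum_subg; [exact: PI_ideal.1 | exact: Gm_subg].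
have g := card_grow pr cardV (Gm_subg br k.+1) hM (fun z hz => sumP_r PI_ideal.1 hz)
  (sumP_l (Gm_subg br k.+1) hy1) hy2.
have hMk : incl (sumP PI (G k.+1)) (G k).
  move=> z [u [w [hu [hw ->]]]]; apply: subgD; first exact: Gm_subg.
    exact: hPI. exact: Gm_anti.
have hall : incl (G k) (sumP PI (G k.+1)).
  by apply: (card_eq hMk); rewrite (e_step hk) //; lia.
exact: (Aprime hL zero PI_ideal hall).
Qed.

Lemma sP_ext (P Q : V -> Prop) : (forall x, P x <-> Q x) -> sP P = sP Q.
Proof. by move=> h; apply/setP => x; rewrite !in_sP; apply/asbP/asbP => /h. Qed.

Lemma main_res a : G d (a *+ p).
Proof.
have hG1 := Gm_subg br 1.
have := descent (t := (d - 1)%N) (k := 1) ltac:(lia) (leqnn 1).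
case.
  by move=> y [c [_ ->]]; apply: pV_G1.
- by move=> h; apply: h; exists a.
case=> j [hj1 hjd hjI hIj].
have hsub : incl (G j.+1) (pim p (G 1)).
  apply: span_min; first exact: pim_subg.
  move=> y [b [c [hb ->]]]; have [b' [_ ->]] := hjI b hb.
  by exists (br b' c); rewrite (brMnl hL); split=> //; apply: (Gm_brl (k := 0)).
case: (classic (incl PK (G 1))) => hK.
  have c0 := card_pimker p (Gm_subg br 0).
  have c1 := card_pimker p hG1.
  have eK : sP (pker p (G 1)) = sP PK.
    by apply: sP_ext => x; split; [case | case=> h1 h2; split=> //; apply: hK].
  have eI : sP PI = sP (G j).
    by apply: sP_ext => x; split; [apply: hIj | apply: hjI].
  have hle : (e j.+1 <= #|sP (pim p (G 1))|)%N.
    apply: dvdn_leq; first exact: card_pos (pim_subg hG1).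
    exact: card_dvd (Gm_subg br _) (pim_subg hG1) hsub.
  rewrite eK in c1; rewrite eI (e_step hj1 (ltnW hjd)) in c0.
  have := e01; rewrite c0 c1 expnS expn1 => h.
  exfalso; apply: (arith_contra (prime_gt1 pr) _ _ (esym h) hle).
    exact: card_pos (pim_subg hG1).
  exact: card_pos PK_ideal.1.
have [k0 [hk0 hnk0]] : exists k0, PK k0 /\ ~ G 1 k0.
  apply: NNPP => hn; apply: hK => y hy; apply: NNPP => h; apply: hn; by exists y.
have hM : subg (sumP PK (G 1)) by apply: sum_subg; [exact: PK_ideal.1 | exact: hG1].
have gM := card_grow pr cardV hG1 hM (fun z hz => sumP_r PK_ideal.1 hz)
  (sumP_l hG1 hk0) hnk0.
have [x hx] : exists x, forall v, cycP x (sumP PK (G 1)) v.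
  case: (classic (exists x, ~ sumP PK (G 1) x)) => [[x hx]|hn]; last first.
    exists 0 => v; apply: cycP_in => //; apply: NNPP => h; apply: hn; by exists v.
  exists x.
  have hJ : subg (cycP x (sumP PK (G 1))) by apply: cyc_subg.
  have gJ := card_grow pr cardV hM hJ (fun y hy => cycP_in _ hM hy) (cycP_x _ hM) hx.
  move=> v; apply: (card_eq (P := cycP x (sumP PK (G 1))) (Q := G 0)) => //.
  rewrite e01; apply: leq_trans gJ; rewrite expnS expn1 -mulnA leq_pmul2l ?prime_gt0 //.
have h1K := L3 hL zero PK_ideal hx.
exfalso; apply: nz.
have : pim p (G 1) x0.
  apply: hsub; apply: (Gm_antiN (i := j.+1)) hx0; exact: hjd.
by case=> c [hc ->]; have [_ ->] := h1K c hc.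
Qed.
End Main.

Theorem lemma2 (p n : nat) (V : finZmodType) (br : V -> V -> V) :
  prime p -> (3 <= n)%N -> is_lie_bracket br ->
  #|V| = (p ^ n)%N -> nil_class br n.-1 ->
  forall a : V, lcs br n.-1 (a *+ p).
Proof.
move=> pr hn hL cardV [hz [x0 [hx0 nz]]] a.
case: n hn cardV hz hx0 => [|[|d]] // hn cardV hz hx0.
have hd : (1 <= d)%N by lia.
exact: (main_res hL pr hd cardV hz hx0 nz).
Qed.
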